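(* Let $(\mathcal A,\lambda_0,S_0)$ be a non-periodic substitution datum over a dilation datum $(G,d,(D_\lambda)_{\lambda>0},\Gamma,V)$, with $D:=D_{\lambda_0}$ and substitution map $S:\mathcal A^\Gamma\to\mathcal A^\Gamma$. Then for each $n\in\mathbb N$, every $\gamma\in\Gamma\setminus D^n(\Gamma)$ and all $\omega_1,\omega_2\in\mathcal A^\Gamma$, \[\big(\gamma^{-1}S^n(\omega_1)\big)|_{V(n)\cap\Gamma}\neq S^n(\omega_2)|_{V(n)\cap\Gamma}.\]
   Context: Dilation datum $(G,d,(D_\lambda),\Gamma,V)$: $G$ connected lcsc group, $d$ left-invariant metric inducing the topology, $\lambda\mapsto D_\lambda$ homomorphism $(\mathbb R_{>0},\cdot)\to\mathrm{Aut}(G)$ with $d(D_\lambda g,D_\lambda h)=\lambda d(g,h)$; $\Gamma$ uniform lattice with $D_\lambda(\Gamma)\subset\Gamma$ for some $\lambda>1$; $V$ bounded Borel set containing an open identity neighbourhood with $G=\bigsqcup_{\gamma\in\Gamma}\gamma V$. Substitution datum $(\mathcal A,\lambda_0,S_0)$: finite $\mathcal A$, $\lambda_0>1+r_+/r_-$ for some $0<r_-<r_+$ with $B(e,r_-)\subset V\subset B(e,r_+)$, $D(\Gamma)\subset\Gamma$, $S_0:\mathcal A\to\mathcal A^{D(V)\cap\Gamma}$. Patches are $P\in\mathcal A^M$, $M\subset\Gamma$; $P_a$ has support $\{e\}$ and value $a$; $\Gamma$ acts by $(\gamma P)(x)=P(\gamma^{-1}x)$, $\mathrm{supp}(\gamma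 P)=\gamma\,\mathrm{supp}P$; $P|_F$ is restriction to $\mathrm{supp}P\cap F$. Substitution map: $\mathrm{supp}S(P)=D(\mathrm{supp}(P)V)\cap\Gamma$, $S(P)(\gamma)=S_0(P(\eta))(D(\eta)^{-1}\gamma)$ for the unique $\eta\in\mathrm{supp}P$ with $\gamma\in D(\eta)(D(V)\cap\Gamma)$. Non-periodic: $S_0$ injective and $(\gamma^{-1}S(P_a))|_{\gamma^{-1}D(V)\cap D(V)}\neq S(P_b)|_{\gamma^{-1}D(V)\cap D(V)}$ for all $\gamma\in(D(V)\cap\Gamma)\setminus\{e\}$, $a,b\in\mathcal A$. $V(0):=V$, $V(n):=D((V(n-1)\cap\Gamma)V)$. *)

(* Defs.v *)
From Stdlib Require Export Reals List ClassicalEpsilon FinFun.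
Open Scope R_scope.
Set Implicit Arguments.

(** An abstract (possibly infinite) group: left identity and left inverse suffice. *)
Record Group := {
  carrier :> Type;
  gmul : carrier -> carrier -> carrier;
  ginv : carrier -> carrier;
  gone : carrier;
  gmul_assoc : forall x y z, gmul x (gmul y z) = gmul (gmul x y) z;
  gmul_1l : forall x, gmul gone x = x;
  gmul_Vl : forall x, gmul (ginv x) x = gone }.
Arguments gmul {g}.
Arguments ginv {g}.
Arguments gone {g}.

Section Topology.
Context {G : Group} (d : G -> G -> R).

Definition is_metric : Prop :=
  (forall x y, 0 <= d x y) /\ (forall x y, d x y = 0 <-> x = y) /\
  (forall x y, d x y = d y x) /\ (forall x y z, d x z <= d x y + d y z).

Definition left_invariant : Prop := forall g x y, d (gmul g x) (gmul g y) = d x y.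

Definition is_open (U : G -> Prop) : Prop :=
  forall x, U x -> exists r, 0 < r /\ forall y, d x y < r -> U y.

Definition is_compact (K : G -> Prop) : Prop :=
  forall (I : Type) (U : I -> G -> Prop), (forall i, is_open (U i)) ->
  (forall x, K x -> exists i, U i x) ->
  exists l : list I, forall x, K x -> exists i, In i l /\ U i x.

Definition is_connected : Prop :=
  forall U, is_open U -> is_open (fun x => ~ U x) ->
  (forall x, U x) \/ (forall x, ~ U x).

Definition locally_compact : Prop :=
  forall x, exists K, is_compact K /\ exists r, 0 < r /\ forall y, d x y < r -> K y.

Definition second_countable : Prop :=
  exists B : nat -> G -> Prop, (forall n, is_open (B n)) /\
  forall U x, is_open U -> U x -> exists n, B n x /\ forall y, B n y -> U y.

Definition topological_group : Prop :=
  (forall x y eps, 0 < eps -> exists del, 0 < del /\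
     forall x' y', d x x' < del -> d y y' < del -> d (gmul x y) (gmul x' y') < eps) /\
  (forall x eps, 0 < eps -> exists del, 0 < del /\
     forall x', d x x' < del -> d (ginv x) (ginv x') < eps).

Definition is_borel (A : G -> Prop) : Prop :=
  forall Sigma : (G -> Prop) -> Prop,
  (forall B C, (forall x, B x <-> C x) -> Sigma B -> Sigma C) ->
  (forall U, is_open U -> Sigma U) ->
  (forall B, Sigma B -> Sigma (fun x => ~ B x)) ->
  (forall F : nat -> G -> Prop, (forall n, Sigma (F n)) -> Sigma (fun x => exists n, F n x)) ->
  Sigma A.

Definition is_bounded (A : G -> Prop) : Prop :=
  exists r, forall x, A x -> d gone x <= r.

End Topology.

Section GroupDefs.
Context {G : Group}.

Definition subgroup (H : G -> Prop) : Prop :=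
  H gone /\ (forall x y, H x -> H y -> H (gmul x y)) /\ (forall x, H x -> H (ginv x)).

(** uniform lattice: discrete cocompact subgroup *)
Definition uniform_lattice (d : G -> G -> R) (Gam : G -> Prop) : Prop :=
  subgroup Gam /\
  (exists U, is_open d U /\ U gone /\ forall g, U g -> Gam g -> g = gone) /\
  (exists K, is_compact d K /\ forall g, exists γ k, Gam γ /\ K k /\ g = gmul γ k).

Definition group_aut (f : G -> G) : Prop :=
  (forall x y, f (gmul x y) = gmul (f x) (f y)) /\ Bijective f.

Definition img (f : G -> G) (X : G -> Prop) : G -> Prop :=
  fun y => exists x, X x /\ y = f x.

End GroupDefs.

Record dilation_datum (G : Group) (d : G -> G -> R) (Dil : R -> G -> G)
    (Gam V : G -> Prop) : Prop := {
  dd_metric : is_metric d;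
  dd_left_inv : left_invariant d;
  dd_topgroup : topological_group d;
  dd_connected : is_connected d;
  dd_loc_compact : locally_compact d;
  dd_second_countable : second_countable d;
  dd_aut : forall l, 0 < l -> group_aut (Dil l);
  dd_hom : forall l m, 0 < l -> 0 < m -> forall x, Dil (l * m) x = Dil l (Dil m x);
  dd_scale : forall l, 0 < l -> forall g h, d (Dil l g) (Dil l h) = l * d g h;
  dd_lattice : uniform_lattice d Gam;
  dd_Gam_dil : exists l, 1 < l /\ forall g, Gam g -> Gam (Dil l g);
  dd_V_bounded : is_bounded d V;
  dd_V_borel : is_borel d V;
  dd_V_nbhd : exists U, is_open d U /\ U gone /\ forall g, U g -> V g;
  dd_tiling : forall g, exists! γ, Gam γ /\ V (gmul (ginv γ) g) }.

(** Patches: partial maps G -> A; supp P = {x | P x <> None}. *)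
Section Patches.
Context {G : Group} {A : Type}.

Definition patch := G -> option A.

(** configurations in A^Gam: patches with support exactly Gam *)
Definition configuration (Gam : G -> Prop) (w : patch) : Prop :=
  forall x, w x <> None <-> Gam x.

Definition act (γ : G) (P : patch) : patch := fun x => P (gmul (ginv γ) x).

Definition restrict (P : patch) (F : G -> Prop) : patch :=
  fun x => if excluded_middle_informative (F x) then P x else None.

Definition Pa (a : A) : patch :=
  fun x => if excluded_middle_informative (x = gone) then Some a else None.

(** substitution map: supp S(P) = D(supp(P) V) ∩ Gam,
    S(P)(γ) = S0(P(η))(D(η)^{-1} γ) for the (unique) η ∈ supp P with
    γ ∈ D(η)(D(V) ∩ Gam). *)
Definition subst_cond (D : G -> G) (Gam V : G -> Prop) (P : patch) (γ η : G) : Prop :=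
  P η <> None /\ Gam (gmul (ginv (D η)) γ) /\ img D V (gmul (ginv (D η)) γ).

Definition subst (D : G -> G) (Gam V : G -> Prop) (S0 : A -> patch) (P : patch) : patch :=
  fun γ =>
  match excluded_middle_informative (exists η, subst_cond D Gam V P γ η) with
  | left H =>
      let η := proj1_sig (constructive_indefinite_description _ H) in
      match P η with
      | Some a => S0 a (gmul (ginv (D η)) γ)
      | None => None
      end
  | right _ => None
  end.

End Patches.

Fixpoint Vn {G : Group} (D : G -> G) (Gam V : G -> Prop) (n : nat) : G -> Prop :=
  match n with
  | O => V
  | S k => fun y => exists γ v, Vn D Gam V k γ /\ Gam γ /\ V v /\ y = D (gmul γ v)
  end.

Record substitution_datum (G : Group) (d : G -> G -> R) (Dil : R -> G -> G)
    (Gam V : G -> Prop) (A : Type) (l0 : R) (S0 : A -> @patch G A) : Prop := {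
  sd_finite : Finite A;
  sd_l0 : exists rm rp, 0 < rm /\ rm < rp /\
            (forall g, d gone g < rm -> V g) /\ (forall g, V g -> d gone g < rp) /\
            1 + rp / rm < l0;
  sd_DGam : forall g, Gam g -> Gam (Dil l0 g);
  sd_S0_supp : forall a x, S0 a x <> None <-> (Gam x /\ img (Dil l0) V x) }.

Definition nonperiodic (G : Group) (Dil : R -> G -> G) (Gam V : G -> Prop)
    (A : Type) (l0 : R) (S0 : A -> @patch G A) : Prop :=
  (forall a b, S0 a = S0 b -> a = b) /\
  forall (γ : G) (a b : A), Gam γ -> img (Dil l0) V γ -> γ <> gone ->
    let F := fun x => img (fun y => gmul (ginv γ) y) (img (Dil l0) V) x /\ img (Dil l0) V x in
    restrict (act (ginv γ) (subst (Dil l0) Gam V S0 (Pa a))) F <>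
    restrict (subst (Dil l0) Gam V S0 (Pa b)) F.

(* Main.v *)
Require Import Defs.
From Stdlib Require Import Classical FunctionalExtensionality Lra.

Lemma g_mulV (G : Group) (x : G) : gmul x (ginv x) = gone.
Proof.
  rewrite <- (gmul_1l G (gmul x (ginv x))).
  rewrite <- (gmul_Vl G (ginv x)) at 1.
  rewrite <- gmul_assoc. rewrite (gmul_assoc G (ginv x) x (ginv x)).
  rewrite gmul_Vl, gmul_1l. apply gmul_Vl.
Qed.

Lemma g_mul1 (G : Group) (x : G) : gmul x gone = x.
Proof. rewrite <- (gmul_Vl G x), gmul_assoc, g_mulV, gmul_1l. reflexivity. Qed.

Lemma g_invK (G : Group) (x : G) : ginv (ginv x) = x.
Proof.
  rewrite <- (g_mul1 G (ginv (ginv x))), <- (gmul_Vl G x), gmul_assoc, gmul_Vl, gmul_1l.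
  reflexivity.
Qed.

Lemma g_Vmul (G : Group) (x y : G) : gmul (ginv x) (gmul x y) = y.
Proof. rewrite gmul_assoc, gmul_Vl, gmul_1l. reflexivity. Qed.

Lemma g_mulVK (G : Group) (x y : G) : gmul x (gmul (ginv x) y) = y.
Proof. rewrite gmul_assoc, g_mulV, gmul_1l. reflexivity. Qed.

Lemma hom_one (G : Group) (D : G -> G) :
  (forall x y, D (gmul x y) = gmul (D x) (D y)) -> D gone = gone.
Proof.
  intros Hh. pose proof (Hh gone gone) as E. rewrite gmul_1l in E.
  rewrite <- (g_Vmul G (D gone) (D gone)). rewrite <- E. apply gmul_Vl.
Qed.

Lemma subst_None (G : Group) (A : Type) (D : G -> G) (Gam V : G -> Prop) (S0 : A -> @patch G A)
  (HGam : subgroup Gam) (HDGam : forall g, Gam g -> Gam (D g))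
  (P : @patch G A) (y : G) :
  (forall x, P x <> None -> Gam x) -> ~ Gam y -> subst D Gam V S0 P y = None.
Proof.
  intros HP Hy. unfold subst.
  destruct (excluded_middle_informative _) as [H|H]; [|reflexivity].
  exfalso. destruct H as [η [Hη [HG _]]]. apply Hy.
  rewrite <- (g_mulVK G (D η) y). destruct HGam as [_ [Hm _]].
  apply Hm; auto.
Qed.

Lemma subst_eval (G : Group) (A : Type) (D : G -> G) (Gam V : G -> Prop) (S0 : A -> @patch G A)
  (Hhom : forall x y, D (gmul x y) = gmul (D x) (D y))
  (Hinj : forall x y, D x = D y -> x = y)
  (Htile : forall g, exists! γ, Gam γ /\ V (gmul (ginv γ) g))
  (P : @patch G A) (η z : G) (a : A) :
  (forall x, P x <> None -> Gam x) -> P η = Some a -> Gam z -> img D V z ->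
  subst D Gam V S0 P (gmul (D η) z) = S0 a z.
Proof.
  intros HP Hη Hz HVz. unfold subst.
  destruct (excluded_middle_informative _) as [H|H].
  - destruct (constructive_indefinite_description _ H) as [η' [Hη' [HG' HV']]]; simpl.
    assert (E : η' = η).
    { destruct HVz as [v [Hv Ev]]. destruct HV' as [v' [Hv' Ev']].
      assert (E1 : gmul η v = gmul η' v').
      { apply Hinj. rewrite !Hhom, <- Ev, <- Ev'. rewrite g_mulVK. reflexivity. }
      destruct (Htile (gmul η v)) as [c [_ Hu]].
      assert (c = η). { apply Hu. split. apply HP. congruence. rewrite g_Vmul. auto. }
      assert (c = η'). { apply Hu. split. apply HP. auto. rewrite E1, g_Vmul. auto. }
      congruence. }
    subst η'. rewrite Hη, g_Vmul. reflexivity.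
  - exfalso. apply H. exists η. unfold subst_cond. rewrite g_Vmul. repeat split; auto; congruence.
Qed.

Lemma subst_config (G : Group) (A : Type) (D : G -> G) (Gam V : G -> Prop) (S0 : A -> @patch G A)
  (HGam : subgroup Gam) (HDGam : forall g, Gam g -> Gam (D g))
  (Hhom : forall x y, D (gmul x y) = gmul (D x) (D y))
  (Hinj : forall x y, D x = D y -> x = y)
  (Hsurj : forall y, exists x, D x = y)
  (Htile : forall g, exists! γ, Gam γ /\ V (gmul (ginv γ) g))
  (HS0 : forall a x, S0 a x <> None <-> (Gam x /\ img D V x))
  (w : @patch G A) :
  configuration Gam w -> configuration Gam (subst D Gam V S0 w).
Proof.
  intros Hw y. split.
  - intros Hn. apply NNPP. intros Hy. apply Hn. eapply subst_None; eauto.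
    intros x; apply Hw.
  - intros Hy. destruct (Hsurj y) as [u Hu].
    destruct (Htile u) as [η [[Hη Hv] _]].
    destruct (w η) as [a|] eqn:Ea; [|exfalso; apply (proj2 (Hw η) Hη); auto].
    set (z := D (gmul (ginv η) u)).
    assert (Ey : y = gmul (D η) z).
    { unfold z. rewrite <- Hhom, g_mulVK. auto. }
    assert (Gz : Gam z).
    { replace z with (gmul (ginv (D η)) y). destruct HGam as [_ [Hm Hi]]. auto.
      rewrite Ey, g_Vmul. auto. }
    rewrite Ey. erewrite subst_eval; eauto.
    + apply HS0. split; auto. exists (gmul (ginv η) u); auto.
    + intros x; apply Hw.
    + exists (gmul (ginv η) u); auto.
Qed.

Lemma iter_config (G : Group) (A : Type) (D : G -> G) (Gam V : G -> Prop) (S0 : A -> @patch G A)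
  (HGam : subgroup Gam) (HDGam : forall g, Gam g -> Gam (D g))
  (Hhom : forall x y, D (gmul x y) = gmul (D x) (D y))
  (Hinj : forall x y, D x = D y -> x = y)
  (Hsurj : forall y, exists x, D x = y)
  (Htile : forall g, exists! γ, Gam γ /\ V (gmul (ginv γ) g))
  (HS0 : forall a x, S0 a x <> None <-> (Gam x /\ img D V x))
  (w : @patch G A) n :
  configuration Gam w -> configuration Gam (Nat.iter n (subst D Gam V S0) w).
Proof.
  intros Hw. induction n; simpl; auto. eapply subst_config; eauto.
Qed.

Lemma Vn_one (G : Group) (D : G -> G) (Gam V : G -> Prop)
  (HGam : subgroup Gam) (Hhom : forall x y, D (gmul x y) = gmul (D x) (D y))
  (HV1 : V gone) n : Vn D Gam V n gone.
Proof.
  induction n; simpl; auto. exists gone, gone. repeat split; auto.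
  apply HGam. rewrite gmul_1l, (hom_one _ _ Hhom). auto.
Qed.

Lemma some_of (G : Group) (A : Type) (Gam : G -> Prop) (w : @patch G A) x :
  configuration Gam w -> Gam x -> exists a, w x = Some a.
Proof.
  intros Hw Hx. destruct (w x) as [a|] eqn:E; eauto. exfalso. apply (proj2 (Hw x) Hx); auto.
Qed.

Lemma fun_diff {X Y : Type} (f g : X -> Y) : f <> g -> exists x, f x <> g x.
Proof.
  intros H. apply NNPP. intros H'. apply H. apply functional_extensionality.
  intros x. apply NNPP. intros Hx. apply H'. eauto.
Qed.

Lemma main_ind (G : Group) (A : Type) (D : G -> G) (Gam V : G -> Prop) (S0 : A -> @patch G A)
  (HGam : subgroup Gam) (HDGam : forall g, Gam g -> Gam (D g))
  (Hhom : forall x y, D (gmul x y) = gmul (D x) (D y))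
  (Hinj : forall x y, D x = D y -> x = y)
  (Hsurj : forall y, exists x, D x = y)
  (Htile : forall g, exists! γ, Gam γ /\ V (gmul (ginv γ) g))
  (HS0 : forall a x, S0 a x <> None <-> (Gam x /\ img D V x))
  (HV1 : V gone)
  (HS0inj : forall a b, S0 a = S0 b -> a = b)
  (HNP : forall (γ : G) (a b : A), Gam γ -> img D V γ -> γ <> gone ->
    let F := fun x => img (fun y => gmul (ginv γ) y) (img D V) x /\ img D V x in
    restrict (act (ginv γ) (subst D Gam V S0 (Pa a))) F <>
    restrict (subst D Gam V S0 (Pa b)) F)
  (w1 w2 : @patch G A) (Hw1 : configuration Gam w1) (Hw2 : configuration Gam w2) :
  forall n γ, Gam γ -> ~ img (Nat.iter n D) Gam γ ->
  exists x, Vn D Gam V n x /\ Gam x /\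
    Nat.iter n (subst D Gam V S0) w1 (gmul γ x) <> Nat.iter n (subst D Gam V S0) w2 x.
Proof.
  assert (Hm : forall x y, Gam x -> Gam y -> Gam (gmul x y)) by apply HGam.
  assert (Hi : forall x, Gam x -> Gam (ginv x)) by apply HGam.
  assert (H1 : Gam gone) by apply HGam.
  assert (D1 : D gone = gone) by (apply hom_one; auto).
  induction n as [|n IH]; intros γ Hγ Hn.
  { exfalso. apply Hn. exists γ. simpl. auto. }
  set (W1 := Nat.iter n (subst D Gam V S0) w1).
  set (W2 := Nat.iter n (subst D Gam V S0) w2).
  assert (C1 : configuration Gam W1) by (eapply iter_config; eauto).
  assert (C2 : configuration Gam W2) by (eapply iter_config; eauto).
  assert (P1 : forall x, W1 x <> None -> Gam x) by (intros x; apply C1).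
  assert (P2 : forall x, W2 x <> None -> Gam x) by (intros x; apply C2).
  simpl. fold W1 W2.
  destruct (Hsurj γ) as [u Hu].
  destruct (Htile u) as [η [[Hη Hv] _]].
  set (δ := D (gmul (ginv η) u)).
  assert (Eγ : γ = gmul (D η) δ) by (unfold δ; rewrite <- Hhom, g_mulVK; auto).
  assert (Gδ : Gam δ).
  { replace δ with (gmul (ginv (D η)) γ); auto. rewrite Eγ, g_Vmul. auto. }
  destruct (classic (δ = gone)) as [Eδ|Nδ].
  - rewrite Eδ, g_mul1 in Eγ.
    assert (Hn' : ~ img (Nat.iter n D) Gam η).
    { intros [ζ [Hζ Eζ]]. apply Hn. exists ζ. split; auto. simpl. congruence. }
    destruct (IH η Hη Hn') as [x [Vx [Gx Nx]]]. fold W1 W2 in Nx.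
    destruct (some_of _ _ _ _ (gmul η x) C1) as [a Ea]; auto.
    destruct (some_of _ _ _ _ x C2) as [b Eb]; auto.
    assert (Nab : S0 a <> S0 b).
    { intros E. apply HS0inj in E. subst b. congruence. }
    destruct (fun_diff _ _ Nab) as [y Ny].
    destruct (classic (Gam y /\ img D V y)) as [[Gy Iy]|Ny'].
    2:{ exfalso. apply Ny. transitivity (@None A).
        apply NNPP; intros Hc; apply Ny'; eapply HS0; eauto.
        symmetry. apply NNPP; intros Hc; apply Ny'; eapply HS0; eauto. }
    exists (gmul (D x) y). destruct Iy as [v [Vv Ev]]. split; [|split].
    + simpl. exists x, v. repeat split; auto. rewrite Hhom. congruence.
    + apply Hm; auto.
    + rewrite Eγ, gmul_assoc, <- Hhom.
      erewrite (subst_eval _ _ _ _ _ S0 Hhom Hinj Htile W1); eauto; [| exists v; auto].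
      erewrite (subst_eval _ _ _ _ _ S0 Hhom Hinj Htile W2); eauto. exists v; auto.
  - destruct (some_of _ _ _ _ η C1) as [a Ea]; auto.
    destruct (some_of _ _ _ _ gone C2) as [b Eb]; auto.
    assert (Iδ : img D V δ) by (exists (gmul (ginv η) u); auto).
    destruct (fun_diff _ _ (HNP δ a b Gδ Iδ Nδ)) as [x Nx].
    unfold restrict in Nx.
    destruct (excluded_middle_informative _) as [[[y [Iy Ey]] Ix]|]; [|congruence].
    unfold act in Nx. rewrite g_invK in Nx.
    assert (Exy : gmul δ x = y) by (rewrite Ey, g_mulVK; auto).
    rewrite Exy in Nx.
    assert (PP : forall c x, @Pa G A c x <> None -> Gam x).
    { intros c z. unfold Pa. destruct (excluded_middle_informative _); congruence. }
    assert (Pc : forall c, @Pa G A c gone = Some c).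
    { intros c. unfold Pa. destruct (excluded_middle_informative _); congruence. }
    destruct (classic (Gam x)) as [Gx|NGx].
    2:{ exfalso. apply Nx. rewrite !(subst_None _ _ _ _ V S0 HGam HDGam _ _ (PP _)); auto.
        rewrite <- Exy. intros Hc. apply NGx. rewrite <- (g_Vmul G δ x). auto. }
    assert (Gy : Gam y) by (rewrite <- Exy; auto).
    assert (Ex : forall (P : @patch G A) c, (forall z, P z <> None -> Gam z) ->
              P gone = Some c -> Gam x -> img D V x -> subst D Gam V S0 P x = S0 c x).
    { intros P c HP Hc Gx' Ix'.
      pose proof (subst_eval _ _ _ _ _ S0 Hhom Hinj Htile P gone x c HP Hc Gx' Ix') as E.
      rewrite D1, gmul_1l in E. exact E. }
    assert (Ey' : subst D Gam V S0 (Pa a) y = S0 a y).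
    { pose proof (subst_eval _ _ _ _ _ S0 Hhom Hinj Htile (Pa a) gone y a (PP a) (Pc a) Gy Iy) as E.
      rewrite D1, gmul_1l in E. exact E. }
    rewrite Ey', (Ex (Pa b) b (PP b) (Pc b) Gx Ix) in Nx.
    exists x. split; [|split]; auto.
    + destruct Ix as [v [Vv Ev]]. simpl. exists gone, v. repeat split; auto.
      apply Vn_one; auto. rewrite gmul_1l. auto.
    + rewrite Eγ, <- gmul_assoc, Exy.
      erewrite (subst_eval _ _ _ _ _ S0 Hhom Hinj Htile W1); eauto.
      rewrite (Ex W2 b P2 Eb Gx Ix). auto.
Qed.

Theorem proposition7 (G : Group) (d : G -> G -> R) (Dil : R -> G -> G)
    (Gam V : G -> Prop) (A : Type) (l0 : R) (S0 : A -> @patch G A) :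
  @dilation_datum G d Dil Gam V ->
  @substitution_datum G d Dil Gam V A l0 S0 ->
  @nonperiodic G Dil Gam V A l0 S0 ->
  forall (n : nat) (γ : G) (w1 w2 : @patch G A),
    Gam γ -> ~ img (Nat.iter n (Dil l0)) Gam γ ->
    configuration Gam w1 -> configuration Gam w2 ->
    restrict (act (ginv γ) (Nat.iter n (subst (Dil l0) Gam V S0) w1))
             (fun x => Vn (Dil l0) Gam V n x /\ Gam x) <>
    restrict (Nat.iter n (subst (Dil l0) Gam V S0) w2)
             (fun x => Vn (Dil l0) Gam V n x /\ Gam x).
Proof.
  intros HD HS [HS0inj HNP] n γ w1 w2 Hγ Hn Hw1 Hw2 Heq.
  assert (Hl0 : 0 < l0).
  { destruct (sd_l0 HS) as [rm [rp [H1 [H2 [_ [_ H3]]]]]].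
    assert (0 < rp / rm) by (apply Rdiv_lt_0_compat; lra). lra. }
  destruct (dd_aut HD Hl0) as [Hhom [g [Hg1 Hg2]]].
  assert (Hinj : forall x y, Dil l0 x = Dil l0 y -> x = y).
  { intros x y E. rewrite <- (Hg1 x), <- (Hg1 y), E. auto. }
  assert (Hsurj : forall y, exists x, Dil l0 x = y) by (intros y; exists (g y); auto).
  assert (HV1 : V gone).
  { destruct (dd_V_nbhd HD) as [U [_ [HU HUV]]]. auto. }
  destruct (main_ind G A (Dil l0) Gam V S0 (proj1 (dd_lattice HD)) (sd_DGam HS) Hhom Hinj Hsurj
              (dd_tiling HD) (sd_S0_supp HS) HV1 HS0inj HNP w1 w2 Hw1 Hw2 n γ Hγ Hn)
    as [x [Vx [Gx Nx]]].
  apply Nx. apply (f_equal (fun f => f x)) in Heq. unfold restrict, act in Heq.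
  destruct (excluded_middle_informative _) as [_|C]; [|exfalso; auto].
  rewrite g_invK in Heq. exact Heq.
Qed.
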